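(* Under the Local Regularity Assumption (see context), let $L:=\sup\{\|\zeta\|:\zeta\in\partial f(x),\,x\in\mathcal{X}\cap B_\epsilon(\bar x)\}$, assumed finite and positive, and $\tau:=\mu/L$, and suppose $\tau\le1/\sqrt2$. Define $\gamma=\frac{\epsilon\rho}{4L+\epsilon\rho}$, $\lambda=\frac{\gamma\mu^2}{\rho L}$, and $q=\sqrt{1-(1-\gamma)\tau^2}$. Let $x_0\in B_{\epsilon/4}(\bar x)\cap\mathcal{X}$ satisfy $\mathrm{dist}(x_0,\mathcal{X}^* )\le\gamma\mu/\rho$. Then the iterates of the geometrically decaying subgradient method with parameters $\lambda,q$ started at $x_0$ all lie in $B_\epsilon(\bar x)$ and satisfy $$\mathrm{dist}^2(x_k,\mathcal{X}^* )\le\frac{\gamma^2\mu^2}{\rho^2}\big(1-(1-\gamma)\tau^2\big)^k\quad\text{for all }k\ge0.$$ Moreover, the iterates converge to some $x_\infty\in\mathcal{X}^*$ with $\|x_k-x_\infty\|\le\frac{\lambda}{1-q}q^k$ for all $k\ge0$.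
   Context: $\mathbf{E}$ is a Euclidean space with norm $\|\cdot\|$; $B_\epsilon(z)$ is the closed ball of radius $\epsilon$ about $z$; $\mathrm{proj}_{\mathcal{X}}$ is the Euclidean projection. For $f\colon\mathbf{E}\to\mathbb{R}$, $\partial f(x)$ is the (Fréchet) subdifferential: the set of $\xi$ with $f(y)\ge f(x)+\langle\xi,y-x\rangle+o(\|y-x\|)$ as $y\to x$. Local Regularity Assumption: $\mathcal{X}\subset\mathbf{E}$ is nonempty closed convex, $f\colon\mathbf{E}\to\mathbb{R}$ is continuous, $\mathcal{X}^*:=\operatorname{argmin}_{x\in\mathcal{X}}f$ is nonempty, $\bar x\in\mathcal{X}^*$, and $\epsilon,\mu,\rho>0$ satisfy: (local weak convexity) $f(y)\ge f(x)+\langle\zeta,y-x\rangle-\frac\rho2\|y-x\|^2$ for all $x,y\in\mathcal{X}\cap B_\epsilon(\bar x)$ and $\zeta\in\partial f(x)$; (local sharpness) $f(x)-\inf_{\mathcal{X}}f\ge\mu\,\mathrm{dist}(x,\mathcal{X}^* )$ for all $x\in\mathcal{X}\cap B_\epsilon(\bar x)$. Geometrically decaying subgradient method with parameters $\lambda>0$, $q\in(0,1)$: given $x_k$, choose $\zeta_k\in\partial f(x_k)$; if $\zeta_k=0$ set $x_{k+1}=x_k$, otherwise $x_{k+1}=\mathrm{proj}_{\mathcal{X}}\big(x_k-\lambda q^k\frac{\zeta_k}{\|\zeta_k\|}\big)$. *)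

(* Defs.v *)
(* classical reals. The Euclidean space E is modelled as R^n
   (every Euclidean space is isometric to some R^n), with vectors as nested pairs. *)
From Stdlib Require Import Reals Lra Classical ClassicalEpsilon.
Open Scope R_scope.

Fixpoint vec (n : nat) : Type :=
  match n with O => unit | S m => (R * vec m)%type end.

Fixpoint vzero (n : nat) : vec n :=
  match n with O => tt | S m => (0, vzero m) end.

Fixpoint vadd (n : nat) : vec n -> vec n -> vec n :=
  match n with
  | O => fun _ _ => tt
  | S m => fun u v => (fst u + fst v, vadd m (snd u) (snd v))
  end.

Fixpoint vscale (n : nat) (a : R) : vec n -> vec n :=
  match n with
  | O => fun _ => tt
  | S m => fun u => (a * fst u, vscale m a (snd u))
  end.

Definition vsub (n : nat) (u v : vec n) : vec n := vadd n u (vscale n (-1) v).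

Fixpoint inner (n : nat) : vec n -> vec n -> R :=
  match n with
  | O => fun _ _ => 0
  | S m => fun u v => fst u * fst v + inner m (snd u) (snd v)
  end.

Definition norm (n : nat) (u : vec n) : R := sqrt (inner n u u).

Definition ball (n : nat) (z : vec n) (eps : R) (x : vec n) : Prop :=
  norm n (vsub n x z) <= eps.

Definition convex (n : nat) (X : vec n -> Prop) : Prop :=
  forall x y t, X x -> X y -> 0 <= t <= 1 ->
    X (vadd n (vscale n t x) (vscale n (1 - t) y)).

(* sequentially closed = closed in R^n *)
Definition closed (n : nat) (X : vec n -> Prop) : Prop :=
  forall (u : nat -> vec n) (x : vec n),
    (forall k, X (u k)) -> Un_cv (fun k => norm n (vsub n (u k) x)) 0 -> X x.

Definition continuous_fun (n : nat) (f : vec n -> R) : Prop :=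
  forall x eps, 0 < eps -> exists delta, 0 < delta /\
    forall y, norm n (vsub n y x) < delta -> Rabs (f y - f x) < eps.

Definition frechet_subdiff (n : nat) (f : vec n -> R) (x xi : vec n) : Prop :=
  forall eps, 0 < eps -> exists delta, 0 < delta /\
    forall y, norm n (vsub n y x) <= delta ->
      f y >= f x + inner n xi (vsub n y x) - eps * norm n (vsub n y x).

Definition argmin_on (n : nat) (f : vec n -> R) (X : vec n -> Prop) (x : vec n) : Prop :=
  X x /\ forall y, X y -> f x <= f y.

Definition is_glb (A : R -> Prop) (m : R) : Prop :=
  (forall a, A a -> m <= a) /\ (forall b, (forall a, A a -> b <= a) -> b <= m).

(* infimum of a set of reals (0 if it has no greatest lower bound) *)
Definition Rinf (A : R -> Prop) : R :=
  match excluded_middle_informative (exists m, is_glb A m) with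
  | left H => proj1_sig (constructive_indefinite_description _ H)
  | right _ => 0
  end.

Definition distS (n : nat) (x : vec n) (S : vec n -> Prop) : R :=
  Rinf (fun d => exists y, S y /\ d = norm n (vsub n x y)).

Definition is_proj (n : nat) (X : vec n -> Prop) (y p : vec n) : Prop :=
  X p /\ forall z, X z -> norm n (vsub n y p) <= norm n (vsub n y z).

Definition gd_subgrad_run (n : nat) (f : vec n -> R) (X : vec n -> Prop)
    (lam q : R) (x zeta : nat -> vec n) : Prop :=
  forall k, frechet_subdiff n f (x k) (zeta k) /\
    (zeta k = vzero n -> x (S k) = x k) /\
    (zeta k <> vzero n ->
       is_proj n X
         (vsub n (x k) (vscale n (lam * q ^ k / norm n (zeta k)) (zeta k)))
         (x (S k))).

(* Main.v *)
Require Import Defs.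
From Stdlib Require Import Reals Lra Psatz Classical ClassicalEpsilon Arith.
Open Scope R_scope.

Lemma cs_step a b S A B : 0<=A -> 0<=B -> S^2 <= A*B -> (a*b+S)^2 <= (a^2+A)*(b^2+B).
Proof.
intros.
assert (HP: 0 <= a^2*B + b^2*A) by nra.
assert (H2: (2*a*b*S)^2 <= (a^2*B + b^2*A)^2).
{ assert (E1: (2*a*b*S)^2 = 4*(a^2*b^2)*S^2) by ring.
  assert (E2: (a^2*B + b^2*A)^2 = 4*(a^2*b^2)*(A*B) + (a^2*B - b^2*A)^2) by ring.
  assert (0 <= a^2*b^2) by (apply Rmult_le_pos; apply pow2_ge_0).
  rewrite E1, E2. pose proof (pow2_ge_0 (a^2*B - b^2*A)).
  assert (4*(a^2*b^2)*S^2 <= 4*(a^2*b^2)*(A*B)) by (apply Rmult_le_compat_l; nra).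
  lra. }
assert (H3: 2*a*b*S <= a^2*B + b^2*A) by nra.
nra.
Qed.

Lemma nsq_nonneg n (u : vec n) : 0 <= inner n u u.
Proof. induction n; simpl. lra. pose proof (IHn (snd u)). nra. Qed.

Lemma nsq_zero n (u : vec n) : inner n u u = 0 -> u = vzero n.
Proof.
induction n; simpl. destruct u; reflexivity.
destruct u as [a u']; simpl. intro H. pose proof (nsq_nonneg n u').
assert (a = 0) by nra. assert (inner n u' u' = 0) by nra. subst. f_equal. auto.
Qed.

Lemma inner_vzero_l n (v : vec n) : inner n (vzero n) v = 0.
Proof. induction n; simpl. reflexivity. rewrite IHn; ring. Qed.

Lemma inner_sym n (u v : vec n) : inner n u v = inner n v u.
Proof. induction n; simpl. reflexivity. rewrite IHn; ring. Qed.

Lemma cs_sq n (u v : vec n) : (inner n u v)^2 <= inner n u u * inner n v v.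
Proof. induction n; simpl. lra.
replace ((fst u * fst u + inner n (snd u) (snd u)) * (fst v * fst v + inner n (snd v) (snd v)))
 with ((fst u ^2 + inner n (snd u) (snd u)) * (fst v ^2 + inner n (snd v) (snd v))) by ring.
apply cs_step; auto using nsq_nonneg. Qed.

Lemma expand_step n (a b w : vec n) s :
  inner n (vsub n (vsub n a (vscale n s w)) b) (vsub n (vsub n a (vscale n s w)) b)
  = inner n (vsub n a b) (vsub n a b) - 2*s*inner n w (vsub n a b) + s^2 * inner n w w.
Proof. unfold vsub. induction n; simpl. ring. rewrite IHn. ring. Qed.

Lemma tri_id n (a b c : vec n) :
  inner n (vsub n a c) (vsub n a c) =
  inner n (vsub n a b) (vsub n a b) + 2 * inner n (vsub n a b) (vsub n b c) + inner n (vsub n b c) (vsub n b c).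
Proof. unfold vsub. induction n; simpl. ring. rewrite (IHn _ (snd b)). ring. Qed.

Lemma nsq_sub_sym n (a b : vec n) :
  inner n (vsub n a b) (vsub n a b) = inner n (vsub n b a) (vsub n b a).
Proof. unfold vsub. induction n; simpl. ring. rewrite IHn. ring. Qed.

Lemma inner_sub_anti n (w a b : vec n) : inner n w (vsub n a b) = - inner n w (vsub n b a).
Proof. unfold vsub. induction n; simpl. ring. rewrite IHn. ring. Qed.

Lemma nsq_sub_self n (a : vec n) : inner n (vsub n a a) (vsub n a a) = 0.
Proof. unfold vsub. induction n; simpl. ring. rewrite IHn. ring. Qed.

Lemma inner_sub_self n (w a : vec n) : inner n w (vsub n a a) = 0.
Proof. unfold vsub. induction n; simpl. ring. rewrite IHn. ring. Qed.

Lemma conv_id n (z y p : vec n) t :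
  inner n (vsub n z (vadd n (vscale n t y) (vscale n (1-t) p)))
          (vsub n z (vadd n (vscale n t y) (vscale n (1-t) p)))
  = inner n (vsub n z p) (vsub n z p) - 2*t*inner n (vsub n z p) (vsub n y p)
    + t^2 * inner n (vsub n y p) (vsub n y p).
Proof. unfold vsub. induction n; simpl. ring. rewrite IHn. ring. Qed.

Lemma proj_id n (z y p : vec n) :
  inner n (vsub n z y) (vsub n z y) = inner n (vsub n z p) (vsub n z p)
    - 2 * inner n (vsub n z p) (vsub n y p) + inner n (vsub n p y) (vsub n p y).
Proof. unfold vsub. induction n; simpl. ring. rewrite (IHn _ _ (snd p)). ring. Qed.

Lemma norm_nonneg n (u : vec n) : 0 <= norm n u.
Proof. unfold norm. apply sqrt_pos. Qed.

Lemma norm_sq n (u : vec n) : norm n u ^ 2 = inner n u u.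
Proof. unfold norm. rewrite <- Rsqr_pow2. apply Rsqr_sqrt, nsq_nonneg. Qed.

Lemma norm_le_nsq n (a b : vec n) : inner n a a <= inner n b b -> norm n a <= norm n b.
Proof. unfold norm. apply sqrt_le_1_alt. Qed.

Lemma nsq_le_norm n (a b : vec n) : norm n a <= norm n b -> inner n a a <= inner n b b.
Proof. intros. rewrite <- !norm_sq. pose proof (norm_nonneg n a). nra. Qed.

Lemma norm_sub_sym n (a b : vec n) : norm n (vsub n a b) = norm n (vsub n b a).
Proof. unfold norm. rewrite nsq_sub_sym. reflexivity. Qed.

Lemma cs n (u v : vec n) : inner n u v <= norm n u * norm n v.
Proof.
pose proof (cs_sq n u v). rewrite <- !norm_sq in H.
pose proof (norm_nonneg n u). pose proof (norm_nonneg n v).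
assert (0 <= norm n u * norm n v) by nra.
destruct (Rle_dec (inner n u v) 0). lra.
nra.
Qed.



Lemma vtriangle n (a b c : vec n) : norm n (vsub n a c) <= norm n (vsub n a b) + norm n (vsub n b c).
Proof.
pose proof (norm_nonneg n (vsub n a b)). pose proof (norm_nonneg n (vsub n b c)).
pose proof (norm_nonneg n (vsub n a c)).
assert (norm n (vsub n a c) ^2 <= (norm n (vsub n a b) + norm n (vsub n b c))^2).
{ rewrite norm_sq, (tri_id n a b c), <- !norm_sq.
  pose proof (cs n (vsub n a b) (vsub n b c)). nra. }
nra.
Qed.

Lemma norm_pos n (u : vec n) : u <> vzero n -> 0 < norm n u.
Proof.
intros H. destruct (Req_dec (norm n u) 0) as [E|E].
- exfalso. apply H, nsq_zero. rewrite <- norm_sq, E. ring.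
- pose proof (norm_nonneg n u). lra.
Qed.

Lemma proj_nonexp n (X : vec n -> Prop) z p y :
  convex n X -> is_proj n X z p -> X y ->
  inner n (vsub n p y) (vsub n p y) <= inner n (vsub n z y) (vsub n z y).
Proof.
intros Hc [Hp Hmin] Hy.
set (c := inner n (vsub n z p) (vsub n y p)).
set (P := inner n (vsub n y p) (vsub n y p)).
assert (HP : 0 <= P) by apply nsq_nonneg.
assert (Hc0 : c <= 0).
{ destruct (Rle_dec c 0) as [?|Hn]; [assumption|]. exfalso.
  set (t := c / (P + c)).
  assert (Ht0 : 0 < t) by (unfold t; apply Rdiv_lt_0_compat; lra).
  assert (Ht : t <= 1).
  { unfold t. apply Rmult_le_reg_r with (P + c). lra. unfold Rdiv. rewrite Rmult_assoc, Rinv_l by lra. lra. }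
  assert (HX := Hc y p t Hy Hp ltac:(lra)).
  pose proof (nsq_le_norm n _ _ (Hmin _ HX)) as Hle.
  rewrite conv_id in Hle. fold c P in Hle.
  assert (2 * t * c <= t^2 * P) by lra.
  assert (t * P = c * P / (P + c)) by (unfold t; field; lra).
  assert (2 * c <= t * P).
  { apply Rmult_le_reg_l with t. lra. nra. }
  assert (c * P / (P + c) <= c).
  { apply Rmult_le_reg_r with (P + c). lra. unfold Rdiv. rewrite Rmult_assoc, Rinv_l by lra. nra. }
  lra. }
rewrite (proj_id n z y p). fold c. pose proof (nsq_nonneg n (vsub n z p)). lra.
Qed.

Lemma norm_fst m (w : vec (S m)) : Rabs (fst w) <= norm (S m) w.
Proof.
unfold norm. simpl. rewrite <- sqrt_Rsqr_abs. apply sqrt_le_1_alt.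
unfold Rsqr. pose proof (nsq_nonneg m (snd w)). lra.
Qed.

Lemma norm_snd m (w : vec (S m)) : norm m (snd w) <= norm (S m) w.
Proof.
unfold norm. simpl. apply sqrt_le_1_alt. nra.
Qed.

Lemma norm_split m (w : vec (S m)) : norm (S m) w <= Rabs (fst w) + norm m (snd w).
Proof.
assert (norm (S m) w ^2 <= (Rabs (fst w) + norm m (snd w))^2).
{ rewrite norm_sq. simpl inner. rewrite <- norm_sq.
  pose proof (norm_nonneg m (snd w)). pose proof (Rabs_pos (fst w)).
  replace (fst w * fst w) with (Rabs (fst w) ^2). nra.
  rewrite <- Rsqr_pow2, <- Rsqr_abs. reflexivity. }
pose proof (norm_nonneg m (snd w)). pose proof (Rabs_pos (fst w)). pose proof (norm_nonneg _ w).
nra.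
Qed.

Definition vcauchy n (u : nat -> vec n) : Prop :=
  forall e, 0 < e -> exists N, forall i j, (N <= i)%nat -> (N <= j)%nat -> norm n (vsub n (u i) (u j)) < e.

Lemma vcomplete n (u : nat -> vec n) : vcauchy n u ->
  exists l, Un_cv (fun k => norm n (vsub n (u k) l)) 0.
Proof.
revert u. induction n; intros u Hu.
- exists tt. intros e He. exists O. intros. unfold norm; simpl. rewrite sqrt_0, Rdist_eq. lra.
- assert (Hc1 : Cauchy_crit (fun k => fst (u k))).
  { intros e He. destruct (Hu e He) as [N HN]. exists N. intros i j Hi Hj.
    unfold Rdist. eapply Rle_lt_trans; [|apply (HN i j Hi Hj)].
    eapply Rle_trans; [|apply norm_fst]. simpl. right. f_equal. ring. }
  destruct (R_complete _ Hc1) as [a Ha].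
  assert (Hc2 : vcauchy n (fun k => snd (u k))).
  { intros e He. destruct (Hu e He) as [N HN]. exists N. intros i j Hi Hj.
    eapply Rle_lt_trans; [|apply (HN i j Hi Hj)]. apply (norm_snd n (vsub (S n) (u i) (u j))). }
  destruct (IHn _ Hc2) as [l2 Hl2].
  exists (a, l2). intros e He.
  destruct (Ha (e/2) ltac:(lra)) as [N1 HN1]. destruct (Hl2 (e/2) ltac:(lra)) as [N2 HN2].
  exists (Nat.max N1 N2). intros k Hk.
  specialize (HN1 k ltac:(lia)). specialize (HN2 k ltac:(lia)).
  unfold Rdist in *. rewrite Rminus_0_r in *. rewrite Rabs_pos_eq in * by apply norm_nonneg.
  eapply Rle_lt_trans; [apply norm_split|]. simpl.
  replace (fst (u k) + -1 * a) with (fst (u k) - a) by ring. unfold vsub in HN2. lra.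
Qed.

Lemma le_eps (A B C d0 : R) : 0 < d0 -> (forall d, 0 < d <= d0 -> A <= B + d * C) -> A <= B.
Proof.
intros Hd0 H. destruct (Rle_dec A B) as [|Hn]; [assumption|]. exfalso.
set (d := Rmin d0 ((A - B) / (2 * (Rabs C + 1)))).
assert (Hp : 0 < (A - B) / (2 * (Rabs C + 1))).
{ apply Rdiv_lt_0_compat. lra. pose proof (Rabs_pos C). lra. }
assert (Hd : 0 < d <= d0). { unfold d. split. apply Rmin_glb_lt; lra. apply Rmin_l. }
specialize (H d Hd).
assert (d * C <= d * Rabs C) by (apply Rmult_le_compat_l; [lra|apply Rle_abs]).
assert (d * (Rabs C + 1) <= (A - B) / 2).
{ assert (d <= (A - B) / (2 * (Rabs C + 1))) by apply Rmin_r.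
  pose proof (Rabs_pos C).
  replace ((A - B) / 2) with ((A - B) / (2 * (Rabs C + 1)) * (Rabs C + 1)) by (field; lra).
  apply Rmult_le_compat_r; lra. }
nra.
Qed.

Lemma Rinf_glb (A : R -> Prop) m : is_glb A m -> Rinf A = m.
Proof.
intros Hm. unfold Rinf. destruct (excluded_middle_informative _) as [e|n].
- destruct (constructive_indefinite_description _ e) as [m' Hm']. simpl.
  destruct Hm as [H1 H2], Hm' as [H1' H2']. apply Rle_antisym; auto.
- exfalso. apply n. eauto.
Qed.

Lemma distS_glb n (x : vec n) (S : vec n -> Prop) : (exists y, S y) ->
  is_glb (fun d => exists y, S y /\ d = norm n (vsub n x y)) (distS n x S).
Proof.
intros [y0 Hy0].
set (E := fun r => exists y, S y /\ - r = norm n (vsub n x y)).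
assert (Hb : bound E). { exists 0. intros r [y [_ Hr]]. pose proof (norm_nonneg n (vsub n x y)). lra. }
assert (Hne : exists r, E r). { exists (- norm n (vsub n x y0)). exists y0. split; auto. ring. }
destruct (completeness E Hb Hne) as [m [Hm1 Hm2]].
assert (G : is_glb (fun d => exists y, S y /\ d = norm n (vsub n x y)) (- m)).
{ split.
  - intros a [y [Hy ->]]. assert (E (- norm n (vsub n x y))) by (exists y; split; auto; ring).
    specialize (Hm1 _ H). lra.
  - intros b Hb'. assert (m <= - b). { apply Hm2. intros r [y [Hy Hr]]. specialize (Hb' (-r) (ex_intro _ y (conj Hy Hr))). lra. }
    lra. }
unfold distS. rewrite (Rinf_glb _ _ G). exact G.
Qed.

Lemma distS_nonneg n x S : (exists y, S y) -> 0 <= distS n x S.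
Proof. intros H. destruct (distS_glb n x S H) as [_ H2]. apply H2. intros a [y [_ ->]]. apply norm_nonneg. Qed.

Lemma distS_le n x (S : vec n -> Prop) y : S y -> distS n x S <= norm n (vsub n x y).
Proof. intros H. destruct (distS_glb n x S (ex_intro _ y H)) as [H1 _]. apply H1. eauto. Qed.

Lemma distS_approx n x (S : vec n -> Prop) e : (exists y, S y) -> 0 < e ->
  exists y, S y /\ norm n (vsub n x y) < distS n x S + e.
Proof.
intros Hne He. destruct (distS_glb n x S Hne) as [H1 H2].
apply NNPP. intros Hn.
assert (distS n x S + e <= distS n x S).
{ apply H2. intros a [y [Hy ->]]. apply Rnot_lt_le. intros Hl. apply Hn. eauto. }
lra.
Qed.

Theorem theorem5p6 (n : nat) (X : vec n -> Prop) (f : vec n -> R)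
  (xbar : vec n) (eps mu rho L : R)
  (* Local Regularity Assumption *)
  (HXne : exists x, X x) (HXcl : closed n X) (HXcv : convex n X)
  (Hfc : continuous_fun n f)
  (Hxbar : argmin_on n f X xbar)
  (Heps : 0 < eps) (Hmu : 0 < mu) (Hrho : 0 < rho)
  (Hwc : forall x y zeta, X x -> ball n xbar eps x -> X y -> ball n xbar eps y ->
     frechet_subdiff n f x zeta ->
     f y >= f x + inner n zeta (vsub n y x) - rho / 2 * (norm n (vsub n y x)) ^ 2)
  (Hsharp : forall x, X x -> ball n xbar eps x ->
     f x - f xbar >= mu * distS n x (argmin_on n f X))
  (* L = sup of subgradient norms, finite and positive *)
  (HL : is_lub (fun r => exists x zeta, X x /\ ball n xbar eps x /\
                  frechet_subdiff n f x zeta /\ r = norm n zeta) L)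
  (HLpos : 0 < L)
  (Htau : mu / L <= 1 / sqrt 2)
  (x0 : vec n) (Hx0X : X x0) (Hx0B : ball n xbar (eps / 4) x0)
  (Hx0d : distS n x0 (argmin_on n f X) <=
          (eps * rho / (4 * L + eps * rho)) * mu / rho)
  (x zeta : nat -> vec n) (Hx0 : x O = x0)
  (Hrun : gd_subgrad_run n f X
            ((eps * rho / (4 * L + eps * rho)) * mu ^ 2 / (rho * L))
            (sqrt (1 - (1 - eps * rho / (4 * L + eps * rho)) * (mu / L) ^ 2))
            x zeta) :
  let gamma := eps * rho / (4 * L + eps * rho) in
  let tau := mu / L in
  let lam := gamma * mu ^ 2 / (rho * L) in
  let q := sqrt (1 - (1 - gamma) * tau ^ 2) in
  (forall k, ball n xbar eps (x k)) /\
  (forall k, (distS n (x k) (argmin_on n f X)) ^ 2 <=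
             gamma ^ 2 * mu ^ 2 / rho ^ 2 * (1 - (1 - gamma) * tau ^ 2) ^ k) /\
  (exists xinf, argmin_on n f X xinf /\
     Un_cv (fun k => norm n (vsub n (x k) xinf)) 0 /\
     forall k, norm n (vsub n (x k) xinf) <= lam / (1 - q) * q ^ k).
Proof.
intros gamma tau lam q.
assert (Hrun' : gd_subgrad_run n f X lam q x zeta) by exact Hrun. clear Hrun.
assert (Hx0d' : distS n x0 (argmin_on n f X) <= gamma * mu / rho) by exact Hx0d. clear Hx0d.
assert (Hden : 0 < 4 * L + eps * rho) by nra.
assert (Hg0 : 0 < gamma) by (unfold gamma; apply Rdiv_lt_0_compat; nra).
assert (Hg1 : gamma < 1).
{ unfold gamma. apply Rmult_lt_reg_r with (4*L+eps*rho); [lra|].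
  unfold Rdiv. rewrite Rmult_assoc, Rinv_l by lra. lra. }
assert (Ht0 : 0 < tau) by (unfold tau; apply Rdiv_lt_0_compat; lra).
assert (Ht2 : tau ^ 2 <= 1/2).
{ pose proof (sqrt_lt_R0 2 ltac:(lra)). pose proof (sqrt_sqrt 2 ltac:(lra)).
  assert (tau * sqrt 2 <= 1).
  { replace 1 with (1 / sqrt 2 * sqrt 2) by (field; lra). apply Rmult_le_compat_r; [lra|]. unfold tau; lra. }
  nra. }
assert (Hmu_eq : mu = tau * L) by (unfold tau; field; lra).
set (R0 := gamma * mu / rho) in *.
set (Q := 1 - (1 - gamma) * tau ^ 2) in *.
assert (HR0 : R0 = eps*(1-gamma)*tau/4) by (unfold R0, gamma, tau; field; split; lra).
assert (Hlam_eq : lam = R0 * tau) by (unfold lam, R0, tau; field; lra).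
assert (HrhoR0 : rho * R0 = gamma * mu) by (unfold R0; field; lra).
assert (HR0sq : gamma^2*mu^2/rho^2 = R0^2) by (unfold R0; field; lra).
assert (HQ : 1/2 <= Q < 1).
{ assert (0 < (1-gamma)*tau^2) by (apply Rmult_lt_0_compat; [lra| apply pow_lt; lra]).
  assert ((1-gamma)*tau^2 <= tau^2) by (pose proof (pow2_ge_0 tau); nra). unfold Q; lra. }
assert (Hq2 : q^2 = Q) by (unfold q; rewrite <- Rsqr_pow2; apply Rsqr_sqrt; lra).
assert (Hq0 : 0 <= q) by (unfold q; apply sqrt_pos).
assert (Hq1 : q < 1).
{ destruct (Rlt_dec q 1) as [|Hn]; [assumption|]. exfalso. assert (q^2 >= 1) by nra. lra. }
assert (HR0pos : 0 < R0) by (rewrite HR0; nra).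
assert (Hlq : lam / (1 - q) <= eps / 2).
{ assert (E4 : 4 * lam / eps = (1 - gamma) * tau^2) by (rewrite Hlam_eq, HR0; field; lra).
  assert (Hqb : q <= 1 - 2 * lam / eps).
  { assert (0 <= 1 - 2 * lam / eps) by nra.
    assert (q^2 <= (1 - 2*lam/eps)^2).
    { rewrite Hq2. unfold Q. rewrite <- E4. assert (0 <= (2*lam/eps)^2) by apply pow2_ge_0. nra. }
    nra. }
  apply Rmult_le_reg_r with (1 - q). lra.
  unfold Rdiv. rewrite Rmult_assoc, Rinv_l by lra.
  assert (lam * 2 / eps <= 1 - q) by lra.
  apply Rmult_le_reg_r with (2 / eps). apply Rdiv_lt_0_compat; lra.
  replace (eps * / 2 * (1 - q) * (2 / eps)) with (1 - q) by (field; lra). lra. }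
assert (HR0eps : R0 < eps / 4).
{ assert (tau < 1) by nra. assert ((1-gamma)*tau < 1) by nra.
  assert (eps*((1-gamma)*tau) < eps*1) by (apply Rmult_lt_compat_l; lra). rewrite HR0; lra. }
assert (HQdef : Q = 1 - (1 - gamma) * tau ^ 2) by reflexivity.
clearbody R0 Q lam q tau gamma.
set (Xs := argmin_on n f X) in *.
assert (Hne : exists y, Xs y) by (exists xbar; exact Hxbar).
assert (HfXs : forall y, Xs y -> f y = f xbar /\ X y).
{ intros y [Hy Hmin]. destruct Hxbar as [Hb Hbmin]. split; [apply Rle_antisym; auto|auto]. }
assert (HLb : forall z w, X z -> ball n xbar eps z -> frechet_subdiff n f z w -> norm n w <= L).
{ intros z w H1 H2 H3. destruct HL as [HLub _]. apply HLub. exists z, w. auto. }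
assert (Hqk : forall k, (q^k)^2 = Q^k).
{ intros k. rewrite <- Hq2. rewrite <- !pow_mult. f_equal. lia. }
assert (Hqk1 : forall k, 0 <= q^k <= 1).
{ induction k; simpl. lra. split. apply Rmult_le_pos; lra. nra. }
assert (Hqd : forall k, q^(S k) <= q^k).
{ intros k; simpl. pose proof (Hqk1 k). nra. }
assert (Hlam0 : 0 < lam) by (rewrite Hlam_eq; nra).
set (P := fun k => X (x k) /\ norm n (vsub n (x k) x0) <= lam * (1 - q^k) / (1 - q)
                  /\ distS n (x k) Xs ^ 2 <= R0^2 * Q^k).
assert (HPball : forall k, P k -> norm n (vsub n (x k) xbar) <= 3 * eps / 4).
{ intros k [_ [H _]]. pose proof (vtriangle n (x k) x0 xbar).
  assert (lam * (1 - q^k) / (1 - q) <= lam / (1 - q)).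
  { unfold Rdiv. apply Rmult_le_compat_r. apply Rlt_le, Rinv_0_lt_compat; lra.
    pose proof (Hqk1 k). nra. }
  unfold ball in Hx0B. lra. }
assert (HPd : forall k, P k -> 0 <= distS n (x k) Xs <= R0 * q^k).
{ intros k [_ [_ H]]. pose proof (distS_nonneg n (x k) Xs Hne). split; auto.
  rewrite <- Hqk in H. pose proof (Hqk1 k).
  assert (0 <= R0 * q^k) by nra. nra. }
assert (Hnorm0 : forall a : vec n, norm n (vsub n a a) = 0).
{ intros a. unfold norm. rewrite nsq_sub_self. apply sqrt_0. }
assert (Hstep : forall k, P k -> norm n (vsub n (x (S k)) (x k)) <= lam * q^k /\ P (S k)).
{ intros k Pk.
  pose proof (HPball k Pk) as Hbk. pose proof (HPd k Pk) as [Hd0 HdR].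
  destruct Pk as [HXk [Hnk Hdk]].
  set (d := distS n (x k) Xs) in *.
  assert (Hballk : ball n xbar eps (x k)) by (unfold ball; lra).
  destruct (Hrun' k) as [Hsub [Hz Hnz]].
  set (d0 := Rmin 1 (eps/4 - R0)).
  assert (Hd0pos : 0 < d0) by (apply Rmin_glb_lt; lra).
  assert (Hd01 : d0 <= 1) by apply Rmin_l.
  assert (Hd02 : d0 <= eps/4 - R0) by apply Rmin_r.
  pose proof (Hqk1 k) as Hr.
  assert (HdR0 : d <= R0) by nra.
  assert (Hkey : forall dl, 0 < dl <= d0 -> exists y, Xs y /\ X y /\
      d <= norm n (vsub n (x k) y) <= d + dl /\
      inner n (zeta k) (vsub n (x k) y) >= mu * d - rho/2 * norm n (vsub n (x k) y)^2).
  { intros dl [Hdl1 Hdl2].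
    destruct (distS_approx n (x k) Xs dl Hne Hdl1) as [y [Hy HyD]].
    destruct (HfXs y Hy) as [Hfy HXy].
    fold d in HyD.
    pose proof (distS_le n (x k) Xs y Hy) as HDd. fold d in HDd.
    assert (Hbally : ball n xbar eps y).
    { unfold ball. pose proof (vtriangle n y (x k) xbar) as Ht.
      rewrite (norm_sub_sym n y (x k)) in Ht. lra. }
    exists y. split; [auto|]. split; [auto|]. split; [lra|].
    pose proof (Hwc (x k) y (zeta k) HXk Hballk HXy Hbally Hsub) as H1.
    pose proof (Hsharp (x k) HXk Hballk) as H2. fold d in H2.
    rewrite inner_sub_anti. rewrite (norm_sub_sym n (x k) y). rewrite Hfy in H1. lra. }
  assert (HM : 0 <= mu * d - rho / 2 * d ^ 2).
  { assert (rho * d <= rho * R0) by (apply Rmult_le_compat_l; lra).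
    assert (rho * d <= mu) by nra.
    assert (0 <= d * (mu - rho * d / 2)) by (apply Rmult_le_pos; lra). nra. }
  destruct (classic (zeta k = vzero n)) as [Hz0 | Hz0].
  - assert (Hdz : d = 0).
    { assert (H: mu*d - rho/2*d^2 <= 0).
      { apply (le_eps _ 0 (rho/2*(2*d+1)) d0 Hd0pos). intros dl Hdl.
        destruct (Hkey dl Hdl) as [y [_ [_ [[HD1 HD2] Hin]]]].
        rewrite Hz0, inner_vzero_l in Hin.
        set (D := norm n (vsub n (x k) y)) in *.
        assert (D^2 <= d^2 + dl*(2*d+1)) by nra.
        nra. }
      assert (rho * d <= rho * R0) by (apply Rmult_le_compat_l; lra).
      assert (rho * d <= gamma * mu) by nra.
      assert (d * (mu - rho * d / 2) <= 0) by nra.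
      destruct (Rle_lt_dec d 0). lra.
      assert (0 < d * (mu - rho * d / 2)) by (apply Rmult_lt_0_compat; nra). lra. }
    specialize (Hz Hz0). unfold P. rewrite Hz. rewrite Hnorm0.
    split. pose proof (Hqk1 k). nra.
    split; [auto|]. split.
    + eapply Rle_trans; [apply Hnk|]. unfold Rdiv. apply Rmult_le_compat_r.
      apply Rlt_le, Rinv_0_lt_compat; lra. pose proof (Hqd k). nra.
    + fold d. rewrite Hdz. pose proof (pow_le Q (S k) ltac:(lra)). nra.
  - specialize (Hnz Hz0).
    set (Nz := norm n (zeta k)) in *.
    assert (HN0 : 0 < Nz) by (apply norm_pos; auto).
    assert (HNL : Nz <= L) by (apply (HLb (x k)); auto).
    set (al := lam * q ^ k) in *.
    assert (Hal : 0 <= al) by (unfold al; nra).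
    set (s := al / Nz) in *.
    set (z := vsub n (x k) (vscale n s (zeta k))) in Hnz.
    assert (Hs0 : 0 <= s) by (unfold s; apply Rmult_le_pos; [lra| apply Rlt_le, Rinv_0_lt_compat; lra]).
    assert (HsN : s^2 * inner n (zeta k) (zeta k) = al^2).
    { rewrite <- norm_sq. fold Nz. unfold s. field. lra. }
    assert (HXS : X (x (S k))) by (destruct Hnz; auto).
    assert (Hn1 : norm n (vsub n (x (S k)) (x k)) <= al).
    { pose proof (proj_nonexp n X z (x (S k)) (x k) HXcv Hnz HXk) as H2.
      unfold z in H2. rewrite expand_step, nsq_sub_self, inner_sub_self, HsN in H2.
      rewrite <- norm_sq in H2. pose proof (norm_nonneg n (vsub n (x (S k)) (x k))). nra. }
    split; [exact Hn1|]. split; [auto|]. split.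
    + pose proof (vtriangle n (x (S k)) (x k) x0).
      replace (lam * (1 - q ^ S k) / (1 - q)) with (al + lam * (1 - q^k) / (1 - q))
        by (unfold al; simpl; field; lra). lra.
    + assert (HB : distS n (x (S k)) Xs ^2 <= d^2*(1+s*rho) - 2*s*mu*d + al^2).
      { apply (le_eps _ _ ((2*d+1)*(1+s*rho)) d0 Hd0pos). intros dl Hdl.
        destruct (Hkey dl Hdl) as [y [Hy [HXy [[HD1 HD2] Hin]]]].
        pose proof (distS_le n (x (S k)) Xs y Hy) as H1.
        pose proof (distS_nonneg n (x (S k)) Xs Hne) as H1'.
        pose proof (proj_nonexp n X z (x (S k)) y HXcv Hnz HXy) as H2.
        unfold z in H2. rewrite expand_step, HsN in H2.
        rewrite <- !norm_sq in H2.
        set (D := norm n (vsub n (x k) y)) in *.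
        assert (H3 : s * inner n (zeta k) (vsub n (x k) y) >= s * (mu * d - rho/2 * D^2)).
        { apply Rle_ge, Rmult_le_compat_l; lra. }
        assert (H4 : D^2 <= d^2 + dl*(2*d+1)) by nra.
        assert (H5 : 0 <= 1 + s * rho) by nra.
        assert (H6 : D^2 * (1 + s*rho) <= (d^2 + dl*(2*d+1)) * (1 + s*rho)) by (apply Rmult_le_compat_r; lra).
        pose proof (norm_nonneg n (vsub n (x (S k)) y)).
        assert (distS n (x (S k)) Xs ^2 <= norm n (vsub n (x (S k)) y) ^ 2) by nra.
        nra. }
      set (M := mu * d - rho / 2 * d ^ 2) in *.
      assert (HsL : al / L * M <= s * M).
      { apply Rmult_le_compat_r; [lra|]. unfold s. unfold Rdiv. apply Rmult_le_compat_l; [lra|].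
        apply Rinv_le_contravar; lra. }
      set (r := q ^ k) in *.
      assert (HalM : al / L * M = R0*tau^2*r*d - gamma*tau^2*r*d^2/2).
      { assert (E1 : al / L * M = R0*tau^2*r*d - (rho*R0)*tau*r*d^2/(2*L)).
        { unfold M, al. rewrite Hlam_eq, Hmu_eq. field. lra. }
        rewrite HrhoR0, Hmu_eq in E1. rewrite E1. field. lra. }
      assert (HQS : Q ^ S k = r^2 * Q) by (unfold r; rewrite Hqk; simpl; ring).
      rewrite HQS.
      assert (Hal2 : al = R0 * tau * r) by (unfold al, r; rewrite Hlam_eq; ring).
      set (u := R0 * r).
      assert (Hdu : d <= u) by (unfold u; lra).
      assert (Hu0 : 0 <= u) by (unfold u; nra).
      assert (Hfac : 0 <= (1+gamma*tau^2)*(d+u) - 2*tau^2*u) by nra.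
      assert (Hprod : 0 <= (u-d)*((1+gamma*tau^2)*(d+u) - 2*tau^2*u)) by (apply Rmult_le_pos; lra).
      assert (Hrr : gamma*tau^2*r*d^2 <= gamma*tau^2*d^2).
      { assert (0 <= gamma*tau^2*d^2).
        { apply Rmult_le_pos; [apply Rmult_le_pos; [lra|apply pow2_ge_0]|apply pow2_ge_0]. }
        replace (gamma*tau^2*r*d^2) with (r*(gamma*tau^2*d^2)) by ring.
        replace (gamma*tau^2*d^2) with (1*(gamma*tau^2*d^2)) at 2 by ring.
        apply Rmult_le_compat_r; lra. }
      assert (B2 : d^2*(1+s*rho) - 2*s*mu*d + al^2 = d^2 - 2*(s*M) + al^2) by (unfold M; field).
      rewrite HQdef. rewrite Hal2 in B2. unfold u in *.
      nra. }
assert (HPall : forall k, P k).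
{ induction k.
  - unfold P. rewrite Hx0. rewrite Hnorm0. split; [auto|]. split.
    + simpl. replace (lam * (1 - 1) / (1 - q)) with 0 by (field; lra). lra.
    + simpl. pose proof (distS_nonneg n x0 Xs Hne). nra.
  - apply Hstep; auto. }
assert (Hsb : forall k, norm n (vsub n (x (S k)) (x k)) <= lam * q^k) by (intros; apply Hstep; auto).
assert (Hsum : forall k m, norm n (vsub n (x (m + k)%nat) (x k)) <= lam * (q^k - q^(m+k)) / (1 - q)).
{ intros k m. induction m.
  - simpl. rewrite Hnorm0. replace (lam * (q^k - q^k) / (1 - q)) with 0 by (field; lra). lra.
  - pose proof (vtriangle n (x (S m + k)%nat) (x (m + k)%nat) (x k)).
    pose proof (Hsb (m + k)%nat). simpl plus in *.
    replace (lam * (q ^ k - q ^ S (m + k)) / (1 - q)) with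
      (lam * q ^ (m + k) + lam * (q ^ k - q ^ (m + k)) / (1 - q)) by (simpl; field; lra).
    lra. }
assert (Hbnd : forall k m, (k <= m)%nat -> norm n (vsub n (x m) (x k)) <= lam * q^k / (1 - q)).
{ intros k m Hkm. replace m with ((m - k) + k)%nat by lia.
  eapply Rle_trans; [apply Hsum|]. unfold Rdiv. apply Rmult_le_compat_r.
  apply Rlt_le, Rinv_0_lt_compat; lra. pose proof (Hqk1 (m - k + k)%nat). nra. }
assert (Hqmono : forall k m, (k <= m)%nat -> q^m <= q^k).
{ intros k m Hkm. induction Hkm. lra. pose proof (Hqd m). lra. }
assert (Hqlim : forall e, 0 < e -> exists N0, forall k, (N0 <= k)%nat -> q^k < e).
{ intros e He. destruct (pow_lt_1_zero q ltac:(rewrite Rabs_pos_eq; lra) e He) as [N0 HN0].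
  exists N0. intros k Hk. specialize (HN0 k Hk). rewrite Rabs_pos_eq in HN0 by (apply pow_le; lra). auto. }
assert (Hcau : vcauchy n x).
{ intros e He. destruct (Hqlim (e * (1 - q) / lam)) as [N0 HN0].
  { apply Rdiv_lt_0_compat; [nra|lra]. }
  exists N0. intros i j Hi Hj.
  assert (Hm : forall a b, (N0 <= a)%nat -> (a <= b)%nat -> norm n (vsub n (x b) (x a)) < e).
  { intros a b Ha Hab. eapply Rle_lt_trans; [apply Hbnd; auto|].
    specialize (HN0 a Ha).
    apply Rmult_lt_reg_r with (1 - q). lra. unfold Rdiv. rewrite Rmult_assoc, Rinv_l by lra.
    rewrite Rmult_1_r.
    assert (lam * q^a < lam * (e * (1 - q) / lam)) by (apply Rmult_lt_compat_l; lra).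
    replace (lam * (e * (1 - q) / lam)) with (e * (1 - q)) in H by (field; lra). lra. }
  destruct (le_lt_dec j i).
  - apply Hm; auto.
  - rewrite norm_sub_sym. apply Hm; lia. }
destruct (vcomplete n x Hcau) as [xinf Hlim].
assert (HXinf : X xinf) by (apply (HXcl x xinf); [intros k; apply (HPall k)|exact Hlim]).
assert (Hdk : forall k, 0 <= distS n (x k) Xs <= R0 * q^k) by (intros; apply HPd, HPall).
split; [|split].
- intros k. unfold ball. pose proof (HPball k (HPall k)). lra.
- intros k. rewrite HR0sq. apply (HPall k).
- exists xinf. split; [|split; [exact Hlim|]].
  + split; [exact HXinf|]. intros z Hz.
    destruct Hxbar as [_ Hbmin]. specialize (Hbmin z Hz).
    cut (f xinf <= f xbar); [lra|].
    apply (le_eps _ _ 1 1 ltac:(lra)). intros e [He _].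
    destruct (Hfc xinf e He) as [dc [Hdc Hc]].
    destruct (Hlim (dc/2) ltac:(lra)) as [N1 HN1].
    destruct (Hqlim (dc / (4 * R0))) as [N2 HN2]. { apply Rdiv_lt_0_compat; lra. }
    set (k := Nat.max N1 N2).
    specialize (HN1 k ltac:(unfold k; lia)). specialize (HN2 k ltac:(unfold k; lia)).
    unfold Rdist in HN1. rewrite Rminus_0_r, Rabs_pos_eq in HN1 by apply norm_nonneg.
    destruct (Hdk k) as [Hk0 Hk1].
    assert (R0 * q^k < R0 * (dc / (4 * R0))) by (apply Rmult_lt_compat_l; lra).
    replace (R0 * (dc / (4 * R0))) with (dc / 4) in H by (field; lra).
    destruct (distS_approx n (x k) Xs (dc/4) Hne ltac:(lra)) as [y [Hy Hyd]].
    destruct (HfXs y Hy) as [Hfy _].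
    pose proof (vtriangle n y (x k) xinf) as Ht. rewrite (norm_sub_sym n y (x k)) in Ht.
    specialize (Hc y ltac:(lra)).
    apply Rabs_def2 in Hc. lra.
  + intros k. apply (le_eps _ _ 1 1 ltac:(lra)). intros e [He _].
    destruct (Hlim e He) as [N1 HN1].
    set (m := Nat.max N1 k).
    specialize (HN1 m ltac:(unfold m; lia)).
    unfold Rdist in HN1. rewrite Rminus_0_r, Rabs_pos_eq in HN1 by apply norm_nonneg.
    pose proof (vtriangle n (x k) (x m) xinf).
    pose proof (Hbnd k m ltac:(unfold m; lia)). rewrite norm_sub_sym in H0.
    replace (lam / (1 - q) * q ^ k) with (lam * q^k / (1 - q)) by (field; lra). lra.
Qed.
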